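(* Let $n\ge 3$ and let $\mathcal N_{2n}$ be the neckband on $2n$ vertices. Then for every vertex $v$ of $\mathcal N_{2n}$, $\gamma_M(\mathcal N_{2n}-v)=\gamma_M(\mathcal N_{2n})-1$; that is, every vertex of $\mathcal N_{2n}$ is a 1-critical-vertex.
   Context: The neckband $\mathcal N_{2n}$ is the graph consisting of the $2n$-cycle $C_{2n}=v_1v_2\cdots v_{2n}v_1$ together with the $n$ chords $a_i=(v_{2i-1},v_{2i+2})$, $i=1,\dots,n$, where indices are taken modulo $2n$ (with representatives in $\{1,\dots,2n\}$). $\gamma_M(H)$ is the maximum genus of a connected graph $H$ (largest $k$ such that $H$ embeds cellularly in the orientable surface of genus $k$). A vertex $v$ is a 1-critical-vertex of $G$ if $G-v$ is connected and $\gamma_M(G-v)=\gamma_M(G)-1$. *)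

(* Defs.v *)
(* Graphs on a finite vertex type T, vertex set A : {set T},
   adjacency e : rel T (assumed symmetric/irreflexive where relevant).
   Cellular orientable embeddings are encoded combinatorially by rotation
   systems (Heffter-Edmonds): a permutation of the darts that cyclically
   permutes the darts at each vertex; faces = orbits of d |-> rho (rev d). *)
From mathcomp Require Import all_boot fingroup perm.
Set Implicit Arguments. Unset Strict Implicit. Unset Printing Implicit Defensive.

Section Graphs.
Variable T : finType.

Definition dart (A : {set T}) (e : rel T) (d : T * T) : bool :=
  [&& d.1 \in A, d.2 \in A & e d.1 d.2].

Definition rev_dart (d : T * T) : T * T := (d.2, d.1).

Definition n_edges (A : {set T}) (e : rel T) : nat := #|dart A e|./2.

Definition is_rotation (A : {set T}) (e : rel T) (rho : {perm T * T}) : bool :=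
  [forall d, (dart A e d ==> (dart A e (rho d) && ((rho d).1 == d.1)))
             && (~~ dart A e d ==> (rho d == d))]
  && [forall d, forall d',
        [&& dart A e d, dart A e d' & d.1 == d'.1] ==> fconnect rho d d'].

Definition face_step (rho : {perm T * T}) (d : T * T) : T * T := rho (rev_dart d).

Definition n_faces (A : {set T}) (e : rel T) (rho : {perm T * T}) : nat :=
  fcard (face_step rho) (dart A e).

(* (A, e) embeds cellularly in the orientable surface of genus k:
   some rotation system with Euler characteristic V - E + F = 2 - 2k. *)
Definition embeds_in_genus (A : {set T}) (e : rel T) (k : nat) : bool :=
  [exists rho : {perm T * T},
     is_rotation A e rho && (#|A| + n_faces A e rho + 2 * k == n_edges A e + 2)].

(* maximum genus: the largest such k (any such k is <= #|darts|) *)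
Definition max_genus (A : {set T}) (e : rel T) : nat :=
  \max_(k < #|dart A e|.+1 | embeds_in_genus A e k) k.

Definition induced (A : {set T}) (e : rel T) : rel T :=
  fun x y => [&& x \in A, y \in A & e x y].

Definition connected (A : {set T}) (e : rel T) : Prop :=
  forall x y, x \in A -> y \in A -> connect (induced A e) x y.

End Graphs.

(* The neckband N_{2n}: vertices v_1..v_{2n} are the ordinals 0..2n-1
   (v_j <-> j-1). Cycle edges j -- j+1 (mod 2n); chords
   a_i = (v_{2i-1}, v_{2i+2}) become (2i-2) -- (2i+1) (mod 2n), i.e. every
   even vertex x is joined to x+3 (mod 2n). *)
Definition nb_step (n : nat) (x y : 'I_(2 * n)) : bool :=
  val y == (val x + 1) %% (2 * n).

Definition nb_chord (n : nat) (x y : 'I_(2 * n)) : bool :=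
  ~~ odd (val x) && (val y == (val x + 3) %% (2 * n)).

Definition neckband (n : nat) : rel 'I_(2 * n) :=
  fun x y => [|| nb_step x y, nb_step y x, nb_chord x y | nb_chord y x].

(* Main.v *)
Require Import Defs.
From mathcomp Require Import all_boot fingroup perm.
From mathcomp Require Import zify.
Set Implicit Arguments. Unset Strict Implicit. Unset Printing Implicit Defensive.

Module MA.

Variant modN_spec (N a : nat) : nat -> Type :=
 | ModNlo : a < N -> modN_spec N a a
 | ModNhi : N <= a -> modN_spec N a (a - N).

Lemma modNP N a : a < 2 * N -> modN_spec N a (a %% N).
Proof.
move=> h; case: (ltnP a N) => h'.
  by rewrite modn_small //; constructor.
have -> : a %% N = a - N.
  rewrite -{1}(subnK h') modnDr modn_small //; lia.
by constructor.
Qed.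

Ltac ordbounds :=
  repeat match goal with x : _ |- _ =>
    lazymatch goal with _ : is_true (nat_of_ord x < _) |- _ => fail
    | _ => have := @ltn_ord _ x; move=> ? end end.

Ltac modsimp :=
  ordbounds;
  repeat match goal with |- context [?a %% ?N] =>
    case: (@modNP N a ltac:(lia)) => ? end.

Ltac crunch_step :=
  match goal with
  | |- context [?a %% ?N] =>
      lazymatch a with context [_ %% _] => fail | _ =>
      case: (@modNP N a ltac:(lia)) => ? end
  | |- context [if ?b then _ else _] =>
      lazymatch b with context [_ %% _] => fail | _ =>
        let E := fresh "E" in case E: b end
  end.

Ltac crunch := ordbounds; repeat crunch_step; try lia.

Section Nb.
Variable n : nat.
Hypothesis n3 : 3 <= n.
Local Notation N := (2 * n).
Local Notation T := 'I_(2 * n).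

Lemma N_gt0 : 0 < N. Proof. lia. Qed.

Definition om (k : nat) : T := Ordinal (ltn_pmod k N_gt0).
Lemma val_om k : val (om k) = k %% N. Proof. by []. Qed.

Definition sc (x : T) : T := om (x + 1).
Definition pr (x : T) : T := om (x + N - 1).
Definition ch (x : T) : T := om (if odd x then x + N - 3 else x + 3).




Lemma nbE (x y : T) : neckband x y = [|| y == sc x, y == pr x | y == ch x].
Proof.
rewrite /neckband /nb_step /nb_chord -!val_eqE /=.
case ox: (odd x) => /=; apply/idP/idP; modsimp.
all: lia.
Qed.

Lemma omK (x : T) : om x = x.
Proof. apply: val_inj => /=; apply: modn_small; exact: ltn_ord. Qed.

Lemma val_om_small k : k < N -> val (om k) = k.
Proof. by move=> h; rewrite /= modn_small. Qed.

Ltac vq := rewrite -?val_eqE /=; try apply: val_inj => /=.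

Lemma scK x : pr (sc x) = x. Proof. vq; crunch. Qed.
Lemma prK x : sc (pr x) = x. Proof. vq; crunch. Qed.
Lemma chK x : ch (ch x) = x. Proof. vq; crunch. Qed.

Lemma ne_sc_pr x : (sc x == pr x) = false. Proof. vq; crunch. Qed.
Lemma ne_sc_ch x : (sc x == ch x) = false. Proof. vq; crunch. Qed.
Lemma ne_pr_ch x : (pr x == ch x) = false. Proof. vq; crunch. Qed.
Lemma ne_pr_sc x : (pr x == sc x) = false. Proof. by rewrite eq_sym ne_sc_pr. Qed.
Lemma ne_ch_sc x : (ch x == sc x) = false. Proof. by rewrite eq_sym ne_sc_ch. Qed.
Lemma ne_ch_pr x : (ch x == pr x) = false. Proof. by rewrite eq_sym ne_pr_ch. Qed.
Lemma ne_sc x : (sc x == x) = false. Proof. vq; crunch. Qed.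
Lemma ne_pr x : (pr x == x) = false. Proof. vq; crunch. Qed.
Lemma ne_ch x : (ch x == x) = false. Proof. vq; crunch. Qed.

Lemma nb_sym : symmetric (@neckband n).
Proof. by move=> x y; rewrite /neckband; case: (nb_step x y); case: (nb_step y x); case: (nb_chord x y); case: (nb_chord y x). Qed.

End Nb.

End MA.
Import MA.

Module MG.

Section Gen.
Variable U : finType.
Variable e : rel U.
Hypothesis esym : symmetric e.

Lemma rev_dartK : involutive (@rev_dart U).
Proof. by case. Qed.

Lemma dart_rev A d : dart A e (rev_dart d) = dart A e d.
Proof. by case: d => x y; rewrite /dart /= esym andbCA andbA. Qed.

Lemma rotP A (rho : {perm U * U}) : is_rotation A e rho ->
  [/\ forall d, dart A e d -> dart A e (rho d) /\ (rho d).1 = d.1,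
      forall d, ~~ dart A e d -> rho d = d &
      forall d d', dart A e d -> dart A e d' -> d.1 = d'.1 -> fconnect rho d d'].
Proof.
case/andP=> /forallP h1 /forallP h2; split.
- move=> d hd; have /andP[/implyP /(_ hd) /andP[-> /eqP ->] _] := h1 d; done.
- move=> d hd; have /andP[_ /implyP /(_ hd) /eqP ->] := h1 d; done.
- move=> d d' hd hd' h; have /forallP /(_ d') /implyP := h2 d; apply.
  by rewrite hd hd' h eqxx.
Qed.

Definition tri_rot A (rho : U * U -> U * U) :=
  [/\ forall d, dart A e d -> dart A e (rho d) /\ (rho d).1 = d.1,
      forall d, ~~ dart A e d -> rho d = d &
      forall d d', dart A e d -> dart A e d' -> d.1 = d'.1 ->
        [\/ d' = d, d' = rho d | d' = rho (rho d)]].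

Lemma tri_is_rotation A (rho : {perm U * U}) : tri_rot A rho -> is_rotation A e rho.
Proof.
case=> h1 h2 h3; apply/andP; split; apply/forallP => d.
  case: (boolP (dart A e d)) => hd /=.
    by have [-> ->] := h1 d hd; rewrite eqxx.
  by rewrite h2.
apply/forallP => d'; apply/implyP => /and3P [hd hd' /eqP h].
case: (h3 d d' hd hd' h) => ->.
- exact: connect0.
- exact: fconnect1.
- exact: (fconnect_iter _ 2).
Qed.

Lemma fs_inj (rho : {perm U * U}) : injective (face_step rho).
Proof. apply: inj_comp; [exact: perm_inj | exact: (can_inj rev_dartK)]. Qed.

Lemma fs_sym (rho : {perm U * U}) : connect_sym (coerced_frel (face_step rho)).
Proof. move=> x y; exact (fconnect_sym (@fs_inj rho) x y). Qed.

Lemma fs_closed A (rho : {perm U * U}) : is_rotation A e rho ->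
  fclosed (face_step rho) (dart A e).
Proof.
move=> /rotP [h1 _ _]; apply: intro_closed; first exact: fs_sym.
move=> x y /eqP <- hx; rewrite /face_step.
by have [] := h1 (rev_dart x); rewrite ?dart_rev.
Qed.

Lemma nfaces_pos A (rho : {perm U * U}) : is_rotation A e rho ->
  (exists d, dart A e d) -> 0 < n_faces A e rho.
Proof.
move=> hr [d hd]; rewrite /n_faces; apply/(fcard_gt0P (@fs_inj rho) (fs_closed hr)); by exists d.
Qed.

Lemma sep_not_connect (f : U * U -> U * U) (S : pred (U * U)) x y :
  injective f -> (forall d, S d -> S (f d)) -> ~~ S x -> S y -> ~~ fconnect f x y.
Proof.
move=> fi hS hx hy; apply/negP => hc.
have cl : fclosed f S.
  apply: intro_closed; first by move=> a b; exact (fconnect_sym fi a b).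
  by move=> a b /eqP <-; apply: hS.
by have := closed_connect cl hc; rewrite -!topredE /= (negbTE hx) hy.
Qed.

Lemma max_genus_eq A k0 : embeds_in_genus A e k0 -> k0 <= #|dart A e| ->
  (forall k, embeds_in_genus A e k -> k <= k0) -> max_genus A e = k0.
Proof.
move=> he hk hub; apply/eqP; rewrite eqn_leq; apply/andP; split.
  by apply/bigmax_leqP => i /hub.
have := @leq_bigmax_cond _ (fun i : 'I_(#|dart A e|.+1) => embeds_in_genus A e i)
   (fun i => nat_of_ord i) (Ordinal (hk : k0 < #|dart A e|.+1)) he.
done.
Qed.

Lemma embeds_ub A k : embeds_in_genus A e k -> (exists d, dart A e d) ->
  2 * k + #|A| + 1 <= n_edges A e + 2.
Proof.
move=> /existsP [rho /andP [hr /eqP h]] hd.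
have := nfaces_pos hr hd; rewrite -h; move=> hp.
lia.
Qed.

Lemma nfaces_two A (rho : {perm U * U}) d0 d1 : is_rotation A e rho ->
  dart A e d0 -> dart A e d1 ->
  (forall d, dart A e d -> fconnect (face_step rho) d0 d || fconnect (face_step rho) d1 d) ->
  n_faces A e rho = (~~ fconnect (face_step rho) d0 d1).+1.
Proof.
move=> hr h0 h1 hc; rewrite /n_faces -(n_comp_closure2 (fs_sym rho)).
apply: eq_n_comp_r => x; rewrite /closure_mem -!topredE /=.
apply/idP/idP => [hx | ].
 apply/negP => hd; case/orP: (hc x hx) => hh.
    by have := disjointFr hd (x:=d0); rewrite -!topredE /= fs_sym hh eqxx => /(_ isT).
  by have := disjointFr hd (x:=d1); rewrite -!topredE /= fs_sym hh eqxx orbT => /(_ isT).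
apply: contraR => hx; apply/pred0P => z /=.
apply/andP => [[hxz]]; rewrite !inE => /orP [] /eqP hz; subst z.
  by move: hx; have := closed_connect (fs_closed hr) hxz; rewrite -!topredE /= => ->; rewrite h0.
by move: hx; have := closed_connect (fs_closed hr) hxz; rewrite -!topredE /= => ->; rewrite h1.
Qed.

Lemma pair_eq (p q : U * U) : p.1 = q.1 -> p.2 = q.2 -> p = q.
Proof. by case: p => a b; case: q => c d /= -> ->. Qed.

Section Skip.
Variables (A : {set U}) (v : U) (rho : {perm U * U}).
Hypothesis tri : tri_rot A rho.

Local Notation D := (dart (A :\ v) e).

Lemma dartD d : D d = [&& dart A e d, d.1 != v & d.2 != v].
Proof.
case: d => x y; rewrite /dart /= !inE.
by case: (x == v); case: (y == v); case: (x \in A); case: (y \in A); case: (e x y).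
Qed.

Lemma skipH d : D d -> ~~ D (rho d) -> D (rho (rho d)).
Proof.
case: tri => t1 t2 t3 hd hn.
move: (hd); rewrite dartD => /and3P [hA h1 h2].
have [hr1 hr2] := t1 d hA.
have [hrr1 hrr2] := t1 _ hr1.
move: hn; rewrite !dartD hr1 hrr1 hr2 hrr2 h1 /= => /negbNE /eqP hv.
rewrite ?hr2 ?h1 /=; apply/eqP => hv2.
have : rho (rho d) = rho d.
  apply: pair_eq; [by rewrite hrr2 | by rewrite hv hv2].
move/perm_inj => hh; move: h2; by rewrite -hh hv eqxx.
Qed.

Definition skipf d := if D d then (if D (rho d) then rho d else rho (rho d)) else d.

Lemma skipf_D d : D d -> D (skipf d) /\ (skipf d).1 = d.1.
Proof.
move=> hd; rewrite /skipf hd.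
case: tri => t1 _ _.
have hA : dart A e d by move: hd; rewrite dartD => /andP [].
have [hr1 hr2] := t1 _ hA.
case: (boolP (D (rho d))) => h; first by [].
split; first exact: skipH.
by have [_ ->] := t1 _ hr1.
Qed.

Lemma skipf_inj : injective skipf.
Proof.
move=> d d'.
case: (boolP (D d)) => hd; case: (boolP (D d')) => hd'.
- rewrite /skipf hd hd'.
  case: (boolP (D (rho d))) => h; case: (boolP (D (rho d'))) => h'.
  + exact: perm_inj.
  + by move=> /perm_inj hh; move: h'; rewrite -hh hd.
  + by move=> /perm_inj hh; move: h; rewrite hh hd'.
  + by move=> /perm_inj /perm_inj.
- move=> hh; have e' : skipf d' = d' by rewrite /skipf (negbTE hd').
  by move: hd'; rewrite -e' -hh (skipf_D hd).1.
- move=> hh; have e' : skipf d = d by rewrite /skipf (negbTE hd).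
  by move: hd; rewrite -e' hh (skipf_D hd').1.
- by rewrite /skipf (negbTE hd) (negbTE hd').
Qed.

Definition skipp : {perm U * U} := perm skipf_inj.

Lemma skippE d : skipp d = skipf d.
Proof. by rewrite permE. Qed.

Lemma skip_tri : tri_rot (A :\ v) skipp.
Proof.
have t := tri; case: t => t1 t2 t3.
split.
- by move=> d hd; rewrite skippE; apply: skipf_D.
- by move=> d hd; rewrite skippE /skipf (negbTE hd).
move=> d d' hd hd' h.
have hA : dart A e d by move: hd; rewrite dartD => /andP [].
have hA' : dart A e d' by move: hd'; rewrite dartD => /andP [].
rewrite !skippE.
case: (t3 d d' hA hA' h) => hh; subst d'.
- by constructor 1.
- by constructor 2; rewrite /skipf hd hd'.
- case: (boolP (D (rho d))) => h1.
    constructor 3; rewrite {2}/skipf hd h1 /skipf h1 hd'; done.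
  by constructor 2; rewrite /skipf hd (negbTE h1).
Qed.

End Skip.

Section Transport.
Variable phi : {perm U}.
Hypothesis phie : forall x y, e (phi x) (phi y) = e x y.

Definition Phif (d : U * U) := (phi d.1, phi d.2).
Lemma Phif_inj : injective Phif.
Proof. by case=> a b [c d] [/perm_inj -> /perm_inj ->]. Qed.
Definition Phi : {perm U * U} := perm Phif_inj.
Lemma PhiE d : Phi d = (phi d.1, phi d.2).
Proof. by rewrite permE. Qed.

Lemma dart_Phi (A : {set U}) d : dart (phi @: A) e (Phi d) = dart A e d.
Proof.
by case: d => x y; rewrite PhiE /dart /= !mem_imset //; [rewrite phie | exact: perm_inj ..].
Qed.

Definition conjr (rho : {perm U * U}) : {perm U * U} := (Phi^-1 * rho * Phi)%g.

Lemma conjrE rho d : conjr rho (Phi d) = Phi (rho d).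
Proof. by rewrite /conjr !permM permK. Qed.

Lemma iter_conj rho k d : iter k (conjr rho) (Phi d) = Phi (iter k rho d).
Proof. by elim: k => //= k ->; rewrite conjrE. Qed.

Lemma fconnect_conj rho d d' :
  fconnect (conjr rho) (Phi d) (Phi d') = fconnect rho d d'.
Proof.
apply/idP/idP => h.
  have := iter_findex h; rewrite iter_conj => /perm_inj <-; exact: fconnect_iter.
have := iter_findex h => <-; rewrite -iter_conj; exact: fconnect_iter.
Qed.

Lemma Phi_rev d : rev_dart (Phi d) = Phi (rev_dart d).
Proof. by rewrite !PhiE. Qed.

Lemma fs_conj rho d : face_step (conjr rho) (Phi d) = Phi (face_step rho d).
Proof. by rewrite /face_step Phi_rev conjrE. Qed.

Lemma Phi_surj d : d = Phi ((Phi^-1)%g d).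
Proof. by rewrite permKV. Qed.

Lemma rot_conj (A : {set U}) rho : is_rotation A e rho -> is_rotation (phi @: A) e (conjr rho).
Proof.
move=> /rotP [h1 h2 h3]; apply/andP; split; apply/forallP => d.
  rewrite (Phi_surj d) conjrE !dart_Phi.
  case: (boolP (dart A e ((Phi^-1)%g d))) => hd /=.
    have [-> he] := h1 _ hd; by rewrite !PhiE /= he eqxx.
  by rewrite h2.
apply/forallP => d'; rewrite (Phi_surj d) (Phi_surj d') !dart_Phi fconnect_conj.
apply/implyP => /and3P [hd hd' /eqP hh]; apply: h3 => //.
by move: hh; rewrite !PhiE /= => /perm_inj.
Qed.

Lemma card_dart_Phi (A : {set U}) : #|dart (phi @: A) e| = #|dart A e|.
Proof.
rewrite -(card_image Phif_inj (dart A e)); apply: eq_card => d.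
rewrite -!topredE /=.
apply/idP/imageP => [hd | [d0 hd0 ->]].
  exists ((Phi^-1)%g d); last by rewrite /Phif -PhiE permKV.
  by rewrite -topredE /= -dart_Phi permKV.
by rewrite /Phif -PhiE dart_Phi.
Qed.

Lemma nfaces_conj (A : {set U}) rho : is_rotation A e rho ->
  n_faces (phi @: A) e (conjr rho) = n_faces A e rho.
Proof.
move=> hr; rewrite /n_faces.
have cl := fs_closed (rot_conj hr).
rewrite (adjunction_n_comp Phi (@fs_sym (conjr rho)) (@fs_sym rho) cl).
  apply: eq_n_comp_r => d; by rewrite !inE -!topredE /= dart_Phi.
apply: strict_adjunction => //.
- move=> x y; exact (fconnect_sym (@fs_inj rho) x y).
- exact: (@perm_inj _ Phi).
- by apply/subsetP => d _; rewrite (Phi_surj d) codom_f.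
- move=> x y _ /=; by rewrite fs_conj (inj_eq perm_inj).
Qed.

Lemma embeds_conj (A : {set U}) k : embeds_in_genus A e k -> embeds_in_genus (phi @: A) e k.
Proof.
case/existsP => rho /andP [hr he]; apply/existsP; exists (conjr rho).
rewrite rot_conj //= nfaces_conj // card_imset; last exact: perm_inj.
by rewrite /n_edges card_dart_Phi.
Qed.

Lemma connected_conj (A : {set U}) : connected A e -> connected (phi @: A) e.
Proof.
move=> hc x y hx hy.
have hx' : (phi^-1)%g x \in A by rewrite -(mem_imset _ _ (@perm_inj _ phi)) permKV.
have hy' : (phi^-1)%g y \in A by rewrite -(mem_imset _ _ (@perm_inj _ phi)) permKV.
have := hc _ _ hx' hy'; case/connectP => p hp hl.
apply/connectP; exists (map phi p); last by rewrite -{1}(permKV phi x) last_map -hl permKV.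
clear hl; move: hp; rewrite -{2}(permKV phi x); elim: p ((phi^-1)%g x) => //= a p ih b.
case/andP => hab hp; rewrite ih // andbT.
move: hab; rewrite /induced !mem_imset ?phie //; exact: perm_inj.
Qed.

End Transport.
End Gen.

End MG.
Import MG.

Module MC.

Section C.
Variable n : nat.
Hypothesis n3 : 3 <= n.
Local Notation N := (2 * n).
Local Notation T := 'I_(2 * n).
Local Notation om := (om n3).
Local Notation sc := (sc n3).
Local Notation pr := (pr n3).
Local Notation ch := (ch n3).
Local Notation e := (@neckband n).

Definition Pd (x : T) := (x, sc x).
Definition Md (x : T) := (x, pr x).
Definition Cd (x : T) := (x, ch x).

Definition nxt0 (x y : T) :=
  if y == sc x then pr x else if y == pr x then ch x else if y == ch x then sc x else y.
Definition z0 : T := om 0.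
Definition nxt1 (x y : T) :=
  if x == z0 then
    (if y == sc x then ch x else if y == ch x then pr x else if y == pr x then sc x else y)
  else nxt0 x y.

Local Ltac ne := rewrite ?(ne_sc_pr n3) ?(ne_sc_ch n3) ?(ne_pr_ch n3) ?(ne_pr_sc n3)
  ?(ne_ch_sc n3) ?(ne_ch_pr n3) ?(ne_sc n3) ?(ne_pr n3) ?(ne_ch n3) ?eqxx.

Lemma nxt0_sc x : nxt0 x (sc x) = pr x. Proof. by rewrite /nxt0; ne. Qed.
Lemma nxt0_pr x : nxt0 x (pr x) = ch x. Proof. by rewrite /nxt0; ne. Qed.
Lemma nxt0_ch x : nxt0 x (ch x) = sc x. Proof. by rewrite /nxt0; ne. Qed.
Lemma nxt0_o x y : ~~ e x y -> nxt0 x y = y.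
Proof. by rewrite (nbE n3) /nxt0 => /norP [/negbTE -> /norP [/negbTE -> /negbTE ->]]. Qed.
Lemma nxt1_sc x : nxt1 x (sc x) = if x == z0 then ch x else pr x.
Proof. by rewrite /nxt1 nxt0_sc; ne. Qed.
Lemma nxt1_pr x : nxt1 x (pr x) = if x == z0 then sc x else ch x.
Proof. by rewrite /nxt1 nxt0_pr; ne. Qed.
Lemma nxt1_ch x : nxt1 x (ch x) = if x == z0 then pr x else sc x.
Proof. by rewrite /nxt1 nxt0_ch; ne. Qed.
Lemma nxt1_o x y : ~~ e x y -> nxt1 x y = y.
Proof.
rewrite /nxt1 => h; rewrite nxt0_o //; move: h.
by rewrite (nbE n3) => /norP [/negbTE -> /norP [/negbTE -> /negbTE ->]]; case: ifP.
Qed.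

Lemma nbcase x y : e x y -> [\/ y = sc x, y = pr x | y = ch x].
Proof. by rewrite (nbE n3) => /or3P [] /eqP ->; [constructor 1|constructor 2|constructor 3]. Qed.

Local Ltac nx := do 4 rewrite ?nxt0_sc ?nxt0_pr ?nxt0_ch ?nxt1_sc ?nxt1_pr ?nxt1_ch.

Lemma nxt0_3 x y : nxt0 x (nxt0 x (nxt0 x y)) = y.
Proof.
case: (boolP (e x y)) => h; last by rewrite !(nxt0_o h).
by case: (nbcase h) => ->; nx.
Qed.

Lemma nxt1_3 x y : nxt1 x (nxt1 x (nxt1 x y)) = y.
Proof.
case: (boolP (e x y)) => h; last by rewrite !(nxt1_o h).
case hz: (x == z0); by case: (nbcase h) => ->; do 4 rewrite ?nxt1_sc ?nxt1_pr ?nxt1_ch ?hz /=.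
Qed.

Lemma nxt0_nb x y : e x y -> e x (nxt0 x y).
Proof. by move=> h; case: (nbcase h) => ->; nx; rewrite (nbE n3) eqxx ?orbT. Qed.
Lemma nxt1_nb x y : e x y -> e x (nxt1 x y).
Proof. by move=> h; case: (nbcase h) => ->; nx; case: (x == z0); rewrite (nbE n3) eqxx ?orbT. Qed.

Definition rot0f (d : T * T) := (d.1, nxt0 d.1 d.2).
Definition rot1f (d : T * T) := (d.1, nxt1 d.1 d.2).

Lemma rot0f_inj : injective rot0f.
Proof.
case=> x y [x' y'] [/= <-] h.
by rewrite -(nxt0_3 x y) h nxt0_3.
Qed.
Lemma rot1f_inj : injective rot1f.
Proof.
case=> x y [x' y'] [/= <-] h.
by rewrite -(nxt1_3 x y) h nxt1_3.
Qed.

Definition rot0 : {perm T * T} := perm rot0f_inj.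
Definition rot1 : {perm T * T} := perm rot1f_inj.
Lemma rot0E d : rot0 d = (d.1, nxt0 d.1 d.2). Proof. by rewrite permE. Qed.
Lemma rot1E d : rot1 d = (d.1, nxt1 d.1 d.2). Proof. by rewrite permE. Qed.

Lemma dartT (d : T * T) : dart [set: T] e d = e d.1 d.2.
Proof. by case: d => x y; rewrite /dart !inE. Qed.

Lemma dartDv (v : T) (d : T * T) :
  dart ([set: T] :\ v) e d = [&& d.1 != v, d.2 != v & e d.1 d.2].
Proof. by case: d => x y; rewrite /dart !inE /=; case: (x == v); case: (y == v); case: (e x y). Qed.

Lemma tri0 : tri_rot e [set: T] rot0.
Proof.
split.
- by move=> [x y]; rewrite !dartT rot0E /= => h; split => //; apply: nxt0_nb.
- by move=> [x y]; rewrite !dartT rot0E /= => h; rewrite nxt0_o.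
- move=> [x y] [x' y']; rewrite !dartT !rot0E /= => h h' hx; subst x'.
  case: (nbcase h) => ->; case: (nbcase h') => ->; nx;
    by [constructor 1 | constructor 2 | constructor 3].
Qed.

Lemma tri1 : tri_rot e [set: T] rot1.
Proof.
split.
- by move=> [x y]; rewrite !dartT rot1E /= => h; split => //; apply: nxt1_nb.
- by move=> [x y]; rewrite !dartT rot1E /= => h; rewrite nxt1_o.
- move=> [x y] [x' y']; rewrite !dartT !rot1E /= => h h' hx; subst x'.
  case hz: (x == z0);
  case: (nbcase h) => ->; case: (nbcase h') => ->; do 4 rewrite ?nxt1_sc ?nxt1_pr ?nxt1_ch ?hz /=;
    by [constructor 1 | constructor 2 | constructor 3].
Qed.

End C.

End MC.
Import MC.

Module MD.

Section D.
Variable n : nat.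
Hypothesis n3 : 3 <= n.
Local Notation N := (2 * n).
Local Notation T := 'I_(2 * n).
Local Notation om := (om n3).
Local Notation sc := (sc n3).
Local Notation pr := (pr n3).
Local Notation ch := (ch n3).
Local Notation e := (@neckband n).
Local Notation Pd := (Pd n3).
Local Notation Md := (Md n3).
Local Notation Cd := (Cd n3).
Local Notation z0 := (z0 n3).
Local Notation rot0 := (rot0 n3).
Local Notation rot1 := (rot1 n3).

Lemma e_sc x : e x (sc x). Proof. by rewrite (nbE n3) eqxx. Qed.
Lemma e_pr x : e x (pr x). Proof. by rewrite (nbE n3) eqxx orbT. Qed.
Lemma e_ch x : e x (ch x). Proof. by rewrite (nbE n3) eqxx !orbT. Qed.

Lemma fs1P x : face_step rot1 (Pd x) = if sc x == z0 then Pd z0 else Cd (sc x).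
Proof.
rewrite /face_step (rot1E n3) /=.
rewrite -[X in nxt1 _ _ X](scK n3 x) (nxt1_pr n3).
by case: eqP => [->|].
Qed.

Lemma fs1M x : face_step rot1 (Md x) = if pr x == z0 then Cd z0 else Md (pr x).
Proof.
rewrite /face_step (rot1E n3) /=.
rewrite -[X in nxt1 _ _ X](prK n3 x) (nxt1_sc n3).
by case: eqP => [->|].
Qed.

Lemma fs1C x : face_step rot1 (Cd x) = if ch x == z0 then Md z0 else Pd (ch x).
Proof.
rewrite /face_step (rot1E n3) /=.
rewrite -[X in nxt1 _ _ X](chK n3 x) (nxt1_ch n3).
by case: eqP => [->|].
Qed.

Definition sk (b : T) := skipp b (tri0 n3).

Lemma skE b d : sk b d =
  if dart ([set: T] :\ b) e d then
    (if dart ([set: T] :\ b) e (rot0 d) then rot0 d else rot0 (rot0 d)) else d.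
Proof. by rewrite /sk skippE. Qed.

Lemma fsbP b x : x != b -> sc x != b ->
  face_step (sk b) (Pd x) = if ch (sc x) == b then Pd (sc x) else Cd (sc x).
Proof.
move=> h1 h2; rewrite /face_step skE /= !dartDv /= h1 h2 nb_sym e_sc /=.
rewrite !(rot0E n3) /= -![X in nxt0 _ _ X](scK n3 x) (nxt0_pr n3) /= h2 e_ch andbT.
case: eqP => hb /=; by rewrite ?(nxt0_ch n3).
Qed.

Lemma fsbM b x : x != b -> pr x != b ->
  face_step (sk b) (Md x) = if pr (pr x) == b then Cd (pr x) else Md (pr x).
Proof.
move=> h1 h2; rewrite /face_step skE /= !dartDv /= h1 h2 nb_sym e_pr /=.
rewrite !(rot0E n3) /= -![X in nxt0 _ _ X](prK n3 x) (nxt0_sc n3) /= h2 e_pr andbT.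
case: eqP => hb /=; by rewrite ?(nxt0_pr n3).
Qed.

Lemma fsbC b x : x != b -> ch x != b ->
  face_step (sk b) (Cd x) = if sc (ch x) == b then Md (ch x) else Pd (ch x).
Proof.
move=> h1 h2; rewrite /face_step skE /= !dartDv /= h1 h2 nb_sym e_ch /=.
rewrite !(rot0E n3) /= -![X in nxt0 _ _ X](chK n3 x) (nxt0_ch n3) /= h2 e_sc andbT.
case: eqP => hb /=; by rewrite ?(nxt0_sc n3).
Qed.

End D.

End MD.
Import MD.

Module ME.

Section E.
Variable n : nat.
Hypothesis n3 : 3 <= n.
Local Notation N := (2 * n).
Local Notation T := 'I_(2 * n).
Local Notation om := (om n3).
Local Notation sc := (sc n3).
Local Notation pr := (pr n3).
Local Notation ch := (ch n3).
Local Notation e := (@neckband n).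

Local Ltac ne := rewrite ?(ne_sc_pr n3) ?(ne_sc_ch n3) ?(ne_pr_ch n3) ?(ne_pr_sc n3)
  ?(ne_ch_sc n3) ?(ne_ch_pr n3) ?(ne_sc n3) ?(ne_pr n3) ?(ne_ch n3) ?eqxx.

Definition nbk (x : T) (k : 'I_3) : T :=
  if val k == 0 then sc x else if val k == 1 then pr x else ch x.

Lemma nbk_e x k : e x (nbk x k).
Proof. rewrite /nbk; case: ifP => _; [exact: e_sc| case: ifP => _; [exact: e_pr | exact: e_ch]]. Qed.

Lemma nbk_ex x y : e x y -> exists k, y = nbk x k.
Proof.
move=> h; case: (nbcase n3 h) => ->.
- by exists (@Ordinal 3 0 isT).
- by exists (@Ordinal 3 1 isT).
- by exists (@Ordinal 3 2 isT).
Qed.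

Lemma nbk_inj x : injective (nbk x).
Proof.
by move=> [[|[|[|k]]] hk] [[|[|[|k']]] hk'] //; rewrite /nbk /=; ne => // h;
  apply: val_inj => //=; move: h => /eqP; ne.
Qed.

Definition gf (p : T * 'I_3) : T * T := (p.1, nbk p.1 p.2).
Lemma gf_inj : injective gf.
Proof. by move=> [x k] [x' k'] [/= <- /nbk_inj ->]. Qed.

Lemma card_dartT : #|dart [set: T] e| = 6 * n.
Proof.
have -> : 6 * n = #|codom gf|.
  rewrite card_codom; last exact: gf_inj.
  transitivity (#|T| * #|'I_3|); first by rewrite !card_ord; lia.
  by rewrite -card_prod.
apply: eq_card => [[x y]]; rewrite -!topredE /= dartT /=.
apply/idP/codomP => [h | [[x' k] [-> ->]]]; last exact: nbk_e.
by have [k hk] := nbk_ex h; exists (x, k); rewrite /gf hk.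
Qed.

Lemma e_irr x : e x x = false.
Proof. by rewrite (nbE n3) ![x == _]eq_sym; ne. Qed.

Definition hf (b : T) (p : bool * 'I_3) : T * T :=
  if p.1 then (nbk b p.2, b) else (b, nbk b p.2).

Lemma hf_inj b : injective (hf b).
Proof.
move=> [[] k] [[] k'] /=; rewrite /hf /=.
- by case=> /nbk_inj ->.
- by case=> h _; move: (nbk_e b k); rewrite h e_irr.
- by case=> h _; move: (nbk_e b k'); rewrite -h e_irr.
- by case=> /nbk_inj ->.
Qed.

Lemma card_dartD b : #|dart ([set: T] :\ b) e| = 6 * n - 6.
Proof.
have hinc : #|[predI dart [set: T] e & [pred d : T * T | (d.1 == b) || (d.2 == b)]]| = 6.
  have -> : 6 = #|codom (hf b)|.
    rewrite card_codom; last exact: hf_inj.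
    by rewrite card_prod card_bool card_ord.
  apply: eq_card => [[x y]]; rewrite !inE -topredE /= dartT /=.
  apply/idP/codomP => [/andP [h /orP [] /eqP hb] | [[[] k] /= ]]; rewrite /hf /=.
  - by subst x; have [k hk] := nbk_ex h; exists (false, k); rewrite hk.
  - subst y; rewrite nb_sym in h; have [k hk] := nbk_ex h; exists (true, k); rewrite hk.
    by [].
  - by case=> -> ->; rewrite nb_sym nbk_e eqxx orbT.
  - by case=> -> ->; rewrite nbk_e eqxx.
have := cardID [pred d : T * T | (d.1 == b) || (d.2 == b)] (dart [set: T] e).
rewrite card_dartT hinc => h.
have <- : #|[predD dart [set: T] e & [pred d : T * T | (d.1 == b) || (d.2 == b)]]| = #|dart ([set: T] :\ b) e|.
  apply: eq_card => [[x y]]; rewrite !inE -!topredE /= dartT dartDv /=.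
  by case: (x == b); case: (y == b); rewrite ?andbF /=.
by rewrite -h addKn.
Qed.

End E.

End ME.
Import ME.

Module MF.

Lemma run (V : finType) (f : V -> V) (g : nat -> V) (a s m : nat) :
  (forall i, i < m -> fconnect f (g (a + s * i)) (g (a + s * i.+1))) ->
  forall i, i <= m -> fconnect f (g a) (g (a + s * i)).
Proof.
move=> h; elim=> [|i ih] hi; first by rewrite muln0 addn0 connect0.
apply: connect_trans (ih (ltnW hi)) (h i hi).
Qed.

Lemma rund (V : finType) (f : V -> V) (g : nat -> V) (a s m : nat) :
  (forall i, i < m -> fconnect f (g (a - s * i)) (g (a - s * i.+1))) ->
  forall i, i <= m -> fconnect f (g a) (g (a - s * i)).
Proof.
move=> h; elim=> [|i ih] hi; first by rewrite muln0 subn0 connect0.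
apply: connect_trans (ih (ltnW hi)) (h i hi).
Qed.

Section F.
Variable n : nat.
Hypothesis n3 : 3 <= n.
Local Notation N := (2 * n).
Local Notation T := 'I_(2 * n).
Local Notation om := (om n3).
Local Notation sc := (sc n3).
Local Notation pr := (pr n3).
Local Notation ch := (ch n3).
Local Notation e := (@neckband n).
Local Notation Pd := (Pd n3).
Local Notation Md := (Md n3).
Local Notation Cd := (Cd n3).
Local Notation z0 := (z0 n3).
Local Notation rot1 := (rot1 n3).
Local Notation fs := (face_step rot1).
Local Notation fc := (fconnect (face_step rot1)).

Local Ltac oq := try (first [apply: val_inj | rewrite -val_eqE]); rewrite /= ?val_om; crunch.

Lemma fc1 a b : fs a = b -> fc a b.
Proof. by move=> <-; apply: fconnect1. Qed.

Lemma stPC k : k.+1 < N -> fc (Pd (om k)) (Cd (om k.+1)).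
Proof.
move=> hk; apply: fc1; rewrite (fs1P n3).
have -> : (sc (om k) == z0) = false by oq.
by have -> : sc (om k) = om k.+1 by oq.
Qed.

Lemma stM j : 2 <= j < N -> fc (Md (om j)) (Md (om j.-1)).
Proof.
move=> hj; apply: fc1; rewrite (fs1M n3).
have -> : (pr (om j) == z0) = false by oq.
by have -> : pr (om j) = om j.-1 by oq.
Qed.

Lemma stodd k : odd k -> k + 4 <= N - 1 -> fc (Pd (om k)) (Pd (om (k + 4))).
Proof.
move=> ok hk; apply: connect_trans (stPC _) _; first lia.
apply: fc1; rewrite (fs1C n3).
have -> : (ch (om k.+1) == z0) = false by oq.
by have -> : ch (om k.+1) = om (k + 4) by oq.
Qed.

Lemma steven k : ~~ odd k -> 4 <= k <= N - 2 -> fc (Pd (om k)) (Pd (om (k - 2))).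
Proof.
move=> ok hk; apply: connect_trans (stPC _) _; first lia.
apply: fc1; rewrite (fs1C n3).
have -> : (ch (om k.+1) == z0) = false by oq.
by have -> : ch (om k.+1) = om (k - 2) by oq.
Qed.

Definition d0F := Md z0.
Definition d1F := Pd (om 1).
Local Notation R a := (fc d0F a || fc d1F a).

Lemma Rtr a b : R a -> fc a b -> R b.
Proof. by move=> /orP [] h1 h2; rewrite (connect_trans h1 h2) ?orbT. Qed.

Lemma hMF j : j < N -> fc d0F (Md (om j)).
Proof.
move=> hj; case: (posnP j) => [->|hj0]; first exact: connect0.
have h1 : fc d0F (Md (om (N - 1))).
  apply: fc1; rewrite /d0F (fs1M n3).
  have -> : (pr z0 == z0) = false by oq.
  by have -> : pr z0 = om (N - 1) by oq.
have : forall i, i <= N - 1 - j -> fc d0F (Md (om (N - 1 - i))).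
  elim=> [|i ih] hi; first by rewrite subn0.
  apply: connect_trans (ih (ltnW hi)) _.
  have -> : N - 1 - i.+1 = (N - 1 - i).-1 by lia.
  apply: stM; lia.
move=> /(_ (N - 1 - j)); have -> : N - 1 - (N - 1 - j) = j by lia.
by apply; lia.
Qed.

Lemma hC0F : fc d0F (Cd z0).
Proof.
apply: connect_trans (hMF (j := 1) _) _; first lia.
apply: fc1; rewrite (fs1M n3).
by have -> : (pr (om 1) == z0) = true by oq.
Qed.

Lemma hP3F : fc d0F (Pd (om 3)).
Proof.
apply: connect_trans hC0F _; apply: fc1; rewrite (fs1C n3).
have -> : (ch z0 == z0) = false by oq.
by have -> : ch z0 = om 3 by oq.
Qed.

Lemma hRunF (a : nat) i : odd a -> a + 4 * i <= N - 1 -> fc (Pd (om a)) (Pd (om (a + 4 * i))).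
Proof.
move=> oa; elim: i => [|i ih] hi; first by rewrite muln0 addn0.
apply: connect_trans (ih _) _; first lia.
have -> : a + 4 * i.+1 = (a + 4 * i) + 4 by lia.
apply: stodd; lia.
Qed.

Lemma hPoddF k : odd k -> k < N -> R (Pd (om k)).
Proof.
move=> ok hk.
case: (boolP (k %% 4 == 1)) => h.
  have -> : k = 1 + 4 * (k %/ 4) by lia.
  by rewrite (hRunF (a := 1)) ?orbT //; lia.
have -> : k = 3 + 4 * (k %/ 4) by lia.
by rewrite (connect_trans hP3F (hRunF (a := 3) _ _)) //; lia.
Qed.

Lemma hP0F : R (Pd z0).
Proof.
apply: Rtr (hPoddF (k := N - 1) _ _) _; try lia.
apply: fc1; rewrite (fs1P n3).
by have -> : (sc (om (N - 1)) == z0) = true by oq.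
Qed.

Lemma hPevF k : ~~ odd k -> k < N -> R (Pd (om k)).
Proof.
move=> ok hk; case: (posnP k) => [->|hk0]; first exact: hP0F.
have h1 : R (Pd (om (N - 2))).
  apply: Rtr hP0F _; apply: connect_trans (stPC (k := 0) _) _; first lia.
  apply: fc1; rewrite (fs1C n3).
  have -> : (ch (om 1) == z0) = false by oq.
  by have -> : ch (om 1) = om (N - 2) by oq.
have : forall i, 2 <= N - 2 - 2 * i -> R (Pd (om (N - 2 - 2 * i))).
  elim=> [|i ih] hi; first by rewrite muln0 subn0.
  apply: Rtr (ih _) _; first lia.
  have -> : N - 2 - 2 * i.+1 = (N - 2 - 2 * i) - 2 by lia.
  apply: steven; lia.
move=> /(_ ((N - 2 - k) %/ 2)); have -> : N - 2 - 2 * ((N - 2 - k) %/ 2) = k by lia.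
by apply; lia.
Qed.

Lemma hPF k : k < N -> R (Pd (om k)).
Proof. by move=> hk; case: (boolP (odd k)) => ok; [apply: hPoddF | apply: hPevF]. Qed.

Lemma hCF k : k < N -> R (Cd (om k)).
Proof.
move=> hk; case: (posnP k) => [->|hk0]; first by rewrite hC0F.
apply: Rtr (hPF (k := k.-1) _) _; first lia.
have -> : k = k.-1.+1 by lia.
apply: stPC; lia.
Qed.

Lemma covF d : dart [set: T] e d -> R d.
Proof.
case: d => x y; rewrite dartT /= => h.
case: (nbcase n3 h) => ->; rewrite -(omK n3 x).
- exact: hPF.
- by rewrite (hMF (ltn_ord x)).
- exact: hCF.
Qed.

Lemma oddF : odd n -> fc d0F d1F.
Proof.
move=> on; apply: connect_trans hP3F _.
apply: connect_trans (hRunF (a := 3) (i := (n - 3) %/ 2) _ _) _; try lia.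
have -> : 3 + 4 * ((n - 3) %/ 2) = N - 3 by lia.
apply: connect_trans (stPC (k := N - 3) _) _; first lia.
apply: fc1; rewrite (fs1C n3).
have -> : (ch (om (N - 3).+1) == z0) = false by oq.
by have -> : ch (om (N - 3).+1) = om 1 by oq.
Qed.

Definition SF (d : T * T) :=
  (d.2 == sc d.1) && (nat_of_ord d.1 %% 4 == 1) || (d.2 == ch d.1) && (nat_of_ord d.1 %% 4 == 2).

Lemma evenF : ~~ odd n -> ~~ fc d0F d1F.
Proof.
move=> en; apply: (@sep_not_connect _ _ SF); first exact: fs_inj.
- move=> [x y]; rewrite /SF /= => /orP [] /andP [/eqP -> hx].
  + rewrite -[face_step _ _]/(face_step rot1 (Pd x)) (fs1P n3).
    have -> : (sc x == z0) = false by oq.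
    by rewrite /= eqxx /=; apply/orP; right; oq.
  + rewrite -[face_step _ _]/(face_step rot1 (Cd x)) (fs1C n3).
    have -> : (ch x == z0) = false by oq.
    by rewrite /= eqxx /=; apply/orP; left; oq.
- by rewrite /SF /d0F /= (ne_pr_sc n3) (ne_pr_ch n3).
- by rewrite /SF /d1F /= eqxx; oq.
Qed.

End F.

End MF.
Import MF.

Module MH.

Section H.
Variable n : nat.
Hypothesis n3 : 3 <= n.
Local Notation N := (2 * n).
Local Notation T := 'I_(2 * n).
Local Notation om := (om n3).
Local Notation sc := (sc n3).
Local Notation pr := (pr n3).
Local Notation ch := (ch n3).
Local Notation e := (@neckband n).
Local Notation Pd := (Pd n3).
Local Notation Md := (Md n3).
Local Notation Cd := (Cd n3).
Local Notation z0 := (z0 n3).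
Local Notation sk := (sk n3).
Local Notation fs := (face_step (sk z0)).
Local Notation fc := (fconnect (face_step (sk z0))).

Local Ltac oq := try (first [apply: val_inj | rewrite -!val_eqE]); rewrite /= ?val_om; crunch.

Lemma fc1 a b : fs a = b -> fc a b.
Proof. by move=> <-; apply: fconnect1. Qed.

Lemma stPC k : 0 < k -> k.+1 < N -> k.+1 != 3 -> fc (Pd (om k)) (Cd (om k.+1)).
Proof.
move=> h0 hk h3; apply: fc1.
have a1 : om k != z0 by oq.
have a2 : sc (om k) != z0 by oq.
rewrite (fsbP a1 a2).
have -> : (ch (sc (om k)) == z0) = false by oq.
by have -> : sc (om k) = om k.+1 by oq.
Qed.

Lemma stCP k : 0 < k < N -> ch (om k) != z0 -> sc (ch (om k)) != z0 ->
  fc (Cd (om k)) (Pd (ch (om k))).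
Proof.
move=> hk h1 h2; apply: fc1.
have a1 : om k != z0 by oq.
rewrite (fsbC a1 h1).
by rewrite (negbTE h2).
Qed.

Lemma stM j : 3 <= j < N -> fc (Md (om j)) (Md (om j.-1)).
Proof.
move=> hj; apply: fc1.
have a1 : om j != z0 by oq.
have a2 : pr (om j) != z0 by oq.
rewrite (fsbM a1 a2).
have -> : (pr (pr (om j)) == z0) = false by oq.
by have -> : pr (om j) = om j.-1 by oq.
Qed.

Lemma stodd k : odd k -> k + 4 <= N - 2 -> fc (Pd (om k)) (Pd (om (k + 4))).
Proof.
move=> ok hk; apply: connect_trans (stPC _ _ _) _; try lia.
apply: connect_trans (stCP _ _ _) _; try oq.
by have -> : ch (om k.+1) = om (k + 4) by oq.
Qed.

Lemma steven k : ~~ odd k -> 4 <= k <= N - 2 -> fc (Pd (om k)) (Pd (om (k - 2))).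
Proof.
move=> ok hk; apply: connect_trans (stPC _ _ _) _; try lia.
apply: connect_trans (stCP _ _ _) _; try oq.
by have -> : ch (om k.+1) = om (k - 2) by oq.
Qed.

Definition d0H := Md (om (N - 1)).
Definition d1H := Pd (om 1).
Local Notation R a := (fc d0H a || fc d1H a).

Lemma Rtr a b : R a -> fc a b -> R b.
Proof. by move=> /orP [] h1 h2; rewrite (connect_trans h1 h2) ?orbT. Qed.

Lemma hM j : 2 <= j < N -> fc d0H (Md (om j)).
Proof.
move=> hj.
have : forall i, i <= N - 1 - j -> fc d0H (Md (om (N - 1 - i))).
  elim=> [|i ih] hi; first by rewrite subn0.
  apply: connect_trans (ih (ltnW hi)) _.
  have -> : N - 1 - i.+1 = (N - 1 - i).-1 by lia.
  apply: stM; lia.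
move=> /(_ (N - 1 - j)); have -> : N - 1 - (N - 1 - j) = j by lia.
by apply; lia.
Qed.

Lemma hC1 : fc d0H (Cd (om 1)).
Proof.
apply: connect_trans (hM (j := 2) _) _; first lia.
apply: fc1.
have a1 : om 2 != z0 by oq.
have a2 : pr (om 2) != z0 by oq.
rewrite (fsbM a1 a2).
have -> : (pr (pr (om 2)) == z0) = true by oq.
by have -> : pr (om 2) = om 1 by oq.
Qed.

Lemma hPN2 : fc d0H (Pd (om (N - 2))).
Proof.
apply: connect_trans hC1 _; apply: connect_trans (stCP _ _ _) _; try oq.
by have -> : ch (om 1) = om (N - 2) by oq.
Qed.

Lemma hPev k : ~~ odd k -> 2 <= k <= N - 2 -> fc d0H (Pd (om k)).
Proof.
move=> ok hk.
have : forall i, 2 <= N - 2 - 2 * i -> fc d0H (Pd (om (N - 2 - 2 * i))).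
  elim=> [|i ih] hi; first by rewrite muln0 subn0 hPN2.
  apply: connect_trans (ih _) _; first lia.
  have -> : N - 2 - 2 * i.+1 = (N - 2 - 2 * i) - 2 by lia.
  apply: steven; lia.
move=> /(_ ((N - 2 - k) %/ 2)); have -> : N - 2 - 2 * ((N - 2 - k) %/ 2) = k by lia.
by apply; lia.
Qed.

Lemma hP3 : fc d0H (Pd (om 3)).
Proof.
apply: connect_trans (hPev (k := 2) _ _) _; try lia.
apply: fc1.
have a1 : om 2 != z0 by oq.
have a2 : sc (om 2) != z0 by oq.
rewrite (fsbP a1 a2).
have -> : (ch (sc (om 2)) == z0) = true by oq.
by have -> : sc (om 2) = om 3 by oq.
Qed.

Lemma hRun (a : nat) i : odd a -> a + 4 * i <= N - 3 -> fc (Pd (om a)) (Pd (om (a + 4 * i))).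
Proof.
move=> oa; elim: i => [|i ih] hi; first by rewrite muln0 addn0.
apply: connect_trans (ih _) _; first lia.
have -> : a + 4 * i.+1 = (a + 4 * i) + 4 by lia.
apply: stodd; lia.
Qed.

Lemma hPodd k : odd k -> k <= N - 3 -> R (Pd (om k)).
Proof.
move=> ok hk.
case: (boolP (k %% 4 == 1)) => h.
  have -> : k = 1 + 4 * (k %/ 4) by lia.
  by rewrite (hRun (a := 1)) ?orbT //; lia.
have -> : k = 3 + 4 * (k %/ 4) by lia.
by rewrite (connect_trans hP3 (hRun (a := 3) _ _)) //; lia.
Qed.

Lemma hP k : 0 < k <= N - 2 -> R (Pd (om k)).
Proof.
move=> hk; case: (boolP (odd k)) => ok; first by apply: hPodd => //; lia.
by rewrite hPev //; lia.
Qed.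

Lemma hC k : 0 < k < N -> k != 3 -> R (Cd (om k)).
Proof.
move=> hk h3; case: (eqVneq k 1) => [->|hk1]; first by rewrite hC1.
apply: Rtr (hP (k := k.-1) _) _; first lia.
have -> : k = k.-1.+1 by lia.
apply: stPC; lia.
Qed.

Lemma covH d : dart ([set: T] :\ z0) e d -> R d.
Proof.
case: d => x y; rewrite dartDv /= => /and3P [hx hy h].
case: (nbcase n3 h) => hy'; subst y; move: hx hy; rewrite -(omK n3 x) => hx hy.
- apply: hP; move: hx hy; oq.
- apply/orP; left; apply: hM; move: hx hy; oq.
- apply: (@hC x); move: hx hy; oq.
Qed.

Lemma oddH : odd n -> fc d0H d1H.
Proof.
move=> on; rewrite fconnect_sym; last exact: fs_inj.
apply: connect_trans (hRun (a := 1) (i := (n - 3) %/ 2) _ _) _; try lia.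
have -> : 1 + 4 * ((n - 3) %/ 2) = N - 5 by lia.
apply: connect_trans (stPC (k := N - 5) _ _ _) _; try lia.
apply: fc1.
have a1 : om (N - 5).+1 != z0 by oq.
have a2 : ch (om (N - 5).+1) != z0 by oq.
rewrite (fsbC a1 a2).
have -> : (sc (ch (om (N - 5).+1)) == z0) = true by oq.
by have -> : ch (om (N - 5).+1) = om (N - 1) by oq.
Qed.

Lemma evenH : ~~ odd n -> ~~ fc d0H d1H.
Proof.
move=> en; apply: (@sep_not_connect _ _ (SF n3)); first exact: fs_inj.
- move=> [x y]; rewrite /SF /= => /orP [] /andP [/eqP -> hx].
  + have a1 : x != z0 by oq.
    have a2 : sc x != z0 by oq.
    rewrite -[face_step _ _]/(fs (Pd x)) (fsbP a1 a2).
    have -> : (ch (sc x) == z0) = false by oq.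
    by rewrite /= eqxx /=; apply/orP; right; oq.
  + have a1 : x != z0 by oq.
    have a2 : ch x != z0 by oq.
    rewrite -[face_step _ _]/(fs (Cd x)) (fsbC a1 a2).
    have -> : (sc (ch x) == z0) = false by oq.
    by rewrite /= eqxx /=; apply/orP; left; oq.
- by rewrite /SF /d0H /= (ne_pr_sc n3) (ne_pr_ch n3).
- by rewrite /SF /d1H /= eqxx; oq.
Qed.

End H.

End MH.
Import MH.

Module MI.

Section I.
Variable n : nat.
Hypothesis n3 : 3 <= n.
Local Notation N := (2 * n).
Local Notation T := 'I_(2 * n).
Local Notation om := (om n3).
Local Notation sc := (sc n3).
Local Notation pr := (pr n3).
Local Notation ch := (ch n3).
Local Notation e := (@neckband n).
Local Notation Pd := (Pd n3).
Local Notation Md := (Md n3).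
Local Notation Cd := (Cd n3).
Local Notation z0 := (z0 n3).
Local Notation z1 := (om 1).
Local Notation sk := (sk n3).
Local Notation fs := (face_step (sk z1)).
Local Notation fc := (fconnect (face_step (sk z1))).

Local Ltac oq := try (first [apply: val_inj | rewrite -!val_eqE]); rewrite /= ?val_om; crunch.

Lemma fc1 a b : fs a = b -> fc a b.
Proof. by move=> <-; apply: fconnect1. Qed.

Lemma stPC k : 2 <= k -> k.+1 < N -> k.+1 != N - 2 -> fc (Pd (om k)) (Cd (om k.+1)).
Proof.
move=> h0 hk h3; apply: fc1.
have a1 : om k != z1 by oq.
have a2 : sc (om k) != z1 by oq.
rewrite (fsbP a1 a2).
have -> : (ch (sc (om k)) == z1) = false by oq.
by have -> : sc (om k) = om k.+1 by oq.
Qed.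

Lemma stCP k : k != 1 -> k < N -> ch (om k) != z1 -> sc (ch (om k)) != z1 ->
  fc (Cd (om k)) (Pd (ch (om k))).
Proof.
move=> hk hk' h1 h2; apply: fc1.
have a1 : om k != z1 by oq.
rewrite (fsbC a1 h1).
by rewrite (negbTE h2).
Qed.

Lemma stM j : 4 <= j < N -> fc (Md (om j)) (Md (om j.-1)).
Proof.
move=> hj; apply: fc1.
have a1 : om j != z1 by oq.
have a2 : pr (om j) != z1 by oq.
rewrite (fsbM a1 a2).
have -> : (pr (pr (om j)) == z1) = false by oq.
by have -> : pr (om j) = om j.-1 by oq.
Qed.

Lemma stodd k : odd k -> 3 <= k -> k + 4 <= N - 1 -> fc (Pd (om k)) (Pd (om (k + 4))).
Proof.
move=> ok k3 hk; apply: connect_trans (stPC _ _ _) _; try lia.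
apply: connect_trans (stCP _ _ _ _) _; try oq.
by have -> : ch (om k.+1) = om (k + 4) by oq.
Qed.

Lemma steven k : ~~ odd k -> 4 <= k <= N - 2 -> fc (Pd (om k)) (Pd (om (k - 2))).
Proof.
move=> ok hk; apply: connect_trans (stPC _ _ _) _; try lia.
apply: connect_trans (stCP _ _ _ _) _; try oq.
by have -> : ch (om k.+1) = om (k - 2) by oq.
Qed.

Definition d0I := Md z0.
Definition d1I := Pd (om 3).
Local Notation R a := (fc d0I a || fc d1I a).

Lemma Rtr a b : R a -> fc a b -> R b.
Proof. by move=> /orP [] h1 h2; rewrite (connect_trans h1 h2) ?orbT. Qed.

Lemma hMN1 : fc d0I (Md (om (N - 1))).
Proof.
apply: fc1.
have a1 : z0 != z1 by oq.
have a2 : pr z0 != z1 by oq.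
rewrite /d0I (fsbM a1 a2).
have -> : (pr (pr z0) == z1) = false by oq.
by have -> : pr z0 = om (N - 1) by oq.
Qed.

Lemma hM j : 3 <= j < N -> fc d0I (Md (om j)).
Proof.
move=> hj.
have : forall i, i <= N - 1 - j -> fc d0I (Md (om (N - 1 - i))).
  elim=> [|i ih] hi; first by rewrite subn0 hMN1.
  apply: connect_trans (ih (ltnW hi)) _.
  have -> : N - 1 - i.+1 = (N - 1 - i).-1 by lia.
  apply: stM; lia.
move=> /(_ (N - 1 - j)); have -> : N - 1 - (N - 1 - j) = j by lia.
by apply; lia.
Qed.

Lemma hC2 : fc d0I (Cd (om 2)).
Proof.
apply: connect_trans (hM (j := 3) _) _; first lia.
apply: fc1.
have a1 : om 3 != z1 by oq.
have a2 : pr (om 3) != z1 by oq.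
rewrite (fsbM a1 a2).
have -> : (pr (pr (om 3)) == z1) = true by oq.
by have -> : pr (om 3) = om 2 by oq.
Qed.

Lemma hP5 : fc d0I (Pd (om 5)).
Proof.
apply: connect_trans hC2 _; apply: connect_trans (stCP _ _ _ _) _; try oq.
by have -> : ch (om 2) = om 5 by oq.
Qed.

Lemma hRun (a : nat) i : odd a -> 3 <= a -> a + 4 * i <= N - 1 ->
  fc (Pd (om a)) (Pd (om (a + 4 * i))).
Proof.
move=> oa a3; elim: i => [|i ih] hi; first by rewrite muln0 addn0.
apply: connect_trans (ih _) _; first lia.
have -> : a + 4 * i.+1 = (a + 4 * i) + 4 by lia.
apply: stodd; lia.
Qed.

Lemma hPodd k : odd k -> 3 <= k < N -> R (Pd (om k)).
Proof.
move=> ok hk.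
case: (boolP (k %% 4 == 1)) => h.
  have -> : k = 5 + 4 * ((k - 5) %/ 4) by lia.
  by rewrite (connect_trans hP5 (hRun (a := 5) _ _ _)) //; lia.
have -> : k = 3 + 4 * ((k - 3) %/ 4) by lia.
by rewrite (hRun (a := 3)) ?orbT //; lia.
Qed.

Lemma hC0 : R (Cd z0).
Proof.
apply: Rtr (hPodd (k := N - 1) _ _) _; try lia.
apply: fc1.
have a1 : om (N - 1) != z1 by oq.
have a2 : sc (om (N - 1)) != z1 by oq.
rewrite (fsbP a1 a2).
have -> : (ch (sc (om (N - 1))) == z1) = false by oq.
by have -> : sc (om (N - 1)) = z0 by oq.
Qed.

Lemma hPN2 : R (Pd (om (N - 2))).
Proof.
apply: Rtr (hPodd (k := N - 3) _ _) _; try lia.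
apply: fc1.
have a1 : om (N - 3) != z1 by oq.
have a2 : sc (om (N - 3)) != z1 by oq.
rewrite (fsbP a1 a2).
have -> : (ch (sc (om (N - 3))) == z1) = true by oq.
by have -> : sc (om (N - 3)) = om (N - 2) by oq.
Qed.

Lemma hPev k : ~~ odd k -> 2 <= k <= N - 2 -> R (Pd (om k)).
Proof.
move=> ok hk.
have : forall i, 2 <= N - 2 - 2 * i -> R (Pd (om (N - 2 - 2 * i))).
  elim=> [|i ih] hi; first by rewrite muln0 subn0 hPN2.
  apply: Rtr (ih _) _; first lia.
  have -> : N - 2 - 2 * i.+1 = (N - 2 - 2 * i) - 2 by lia.
  apply: steven; lia.
move=> /(_ ((N - 2 - k) %/ 2)); have -> : N - 2 - 2 * ((N - 2 - k) %/ 2) = k by lia.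
by apply; lia.
Qed.

Lemma hP k : 2 <= k < N -> R (Pd (om k)).
Proof.
move=> hk; case: (boolP (odd k)) => ok; first by apply: hPodd => //; lia.
by apply: hPev => //; lia.
Qed.

Lemma hC k : k < N -> k != 1 -> k != N - 2 -> R (Cd (om k)).
Proof.
move=> hk h1 h2; case: (eqVneq k 0) => [->|hk0]; first exact: hC0.
case: (eqVneq k 2) => [->|hk2]; first by rewrite hC2.
apply: Rtr (hP (k := k.-1) _) _; first lia.
have -> : k = k.-1.+1 by lia.
apply: stPC; lia.
Qed.

Lemma covI d : dart ([set: T] :\ z1) e d -> R d.
Proof.
case: d => x y; rewrite dartDv /= => /and3P [hx hy h].
case: (nbcase n3 h) => hy'; subst y; move: hx hy; rewrite -(omK n3 x) => hx hy.
- apply: hP; move: hx hy; oq.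
- case: (eqVneq (nat_of_ord x) 0) => hx0.
    by rewrite /d0I hx0 -/z0 connect0.
  apply/orP; left; apply: hM; move: hx hy hx0; oq.
- apply: (@hC x); move: hx hy; oq.
Qed.

Lemma oddI : odd n -> fc d0I d1I.
Proof.
move=> on; apply: connect_trans hP5 _.
apply: connect_trans (hRun (a := 5) (i := (n - 3) %/ 2) _ _ _) _; try lia.
have -> : 5 + 4 * ((n - 3) %/ 2) = N - 1 by lia.
apply: (connect_trans (y := Cd z0)).
  apply: fc1.
  have a1 : om (N - 1) != z1 by oq.
  have a2 : sc (om (N - 1)) != z1 by oq.
  rewrite (fsbP a1 a2).
  have -> : (ch (sc (om (N - 1))) == z1) = false by oq.
  by have -> : sc (om (N - 1)) = z0 by oq.
apply: fc1.
have a1 : z0 != z1 by oq.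
have a2 : ch z0 != z1 by oq.
rewrite (fsbC a1 a2).
have -> : (sc (ch z0) == z1) = false by oq.
by have -> : ch z0 = om 3 by oq.
Qed.

Definition SI (d : T * T) :=
  (d.2 == sc d.1) && (nat_of_ord d.1 %% 4 == 3) || (d.2 == ch d.1) && (nat_of_ord d.1 %% 4 == 0).

Lemma evenI : ~~ odd n -> ~~ fc d0I d1I.
Proof.
move=> en; apply: (@sep_not_connect _ _ SI); first exact: fs_inj.
- move=> [x y]; rewrite /SI /= => /orP [] /andP [/eqP -> hx].
  + have a1 : x != z1 by oq.
    have a2 : sc x != z1 by oq.
    rewrite -[face_step _ _]/(fs (Pd x)) (fsbP a1 a2).
    have -> : (ch (sc x) == z1) = false by oq.
    by rewrite /= eqxx /=; apply/orP; right; oq.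
  + have a1 : x != z1 by oq.
    have a2 : ch x != z1 by oq.
    rewrite -[face_step _ _]/(fs (Cd x)) (fsbC a1 a2).
    have -> : (sc (ch x) == z1) = false by oq.
    by rewrite /= eqxx /=; apply/orP; left; oq.
- by rewrite /SI /d0I /= (ne_pr_sc n3) (ne_pr_ch n3).
- by rewrite /SI /d1I /= eqxx; oq.
Qed.

End I.

End MI.
Import MI.

Module MJ.

Section J.
Variable n : nat.
Hypothesis n3 : 3 <= n.
Local Notation N := (2 * n).
Local Notation T := 'I_(2 * n).
Local Notation om := (om n3).
Local Notation sc := (sc n3).
Local Notation pr := (pr n3).
Local Notation ch := (ch n3).
Local Notation e := (@neckband n).
Local Notation Pd := (Pd n3).
Local Notation Md := (Md n3).
Local Notation Cd := (Cd n3).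
Local Notation z0 := (z0 n3).
Local Notation z1 := (om 1).

Local Ltac oq := try (first [apply: val_inj | rewrite -!val_eqE]); rewrite /= ?val_om; crunch.

Lemma esymm : symmetric e. Proof. exact: nb_sym. Qed.

Lemma rotF : is_rotation [set: T] e (rot1 n3).
Proof. exact: tri_is_rotation (tri1 n3). Qed.

Lemma nfacesF : n_faces [set: T] e (rot1 n3) = if odd n then 1 else 2.
Proof.
rewrite (nfaces_two esymm (d0 := d0F n3) (d1 := d1F n3) rotF).
- case: ifP => h; first by rewrite oddF.
  by rewrite evenF // h.
- by rewrite dartT /d0F /= e_pr.
- by rewrite dartT /d1F /= e_sc.
- exact: covF.
Qed.

Lemma card_setT : #|[set: T]| = N.
Proof. by rewrite cardsT card_ord. Qed.

Lemma card_setD1 (v : T) : #|[set: T] :\ v| = N - 1.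
Proof. have := cardsD1 v [set: T]; rewrite in_setT card_setT /= => h; apply/eqP; rewrite -(eqn_add2l 1) -h; apply/eqP; lia. Qed.

Lemma edgesF : n_edges [set: T] e = 3 * n.
Proof. rewrite /n_edges card_dartT; lia. Qed.

Lemma edgesD (v : T) : n_edges ([set: T] :\ v) e = 3 * n - 3.
Proof. rewrite /n_edges card_dartD; lia. Qed.

Lemma maxF : max_genus [set: T] e = (n + 1) %/ 2.
Proof.
apply: max_genus_eq.
- apply/existsP; exists (rot1 n3); rewrite rotF /= nfacesF card_setT edgesF.
  apply/eqP; case: ifP => h; lia.
- rewrite card_dartT; lia.
- move=> k hk; have := embeds_ub esymm hk.
  rewrite card_setT edgesF => /(_ (ex_intro _ (Pd z0) _)).
  rewrite dartT e_sc => /(_ isT); lia.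
Qed.

Lemma rotB b : is_rotation ([set: T] :\ b) e (sk n3 b).
Proof. exact: tri_is_rotation (skip_tri b (tri0 n3)). Qed.

Lemma nfacesB0 : n_faces ([set: T] :\ z0) e (sk n3 z0) = if odd n then 1 else 2.
Proof.
rewrite (nfaces_two esymm (d0 := d0H n3) (d1 := d1H n3) (rotB z0)).
- case: ifP => h; first by rewrite oddH.
  by rewrite evenH // h.
- rewrite dartDv /d0H /= e_pr andbT; apply/andP; split; oq.
- rewrite dartDv /d1H /= e_sc andbT; apply/andP; split; oq.
- exact: covH.
Qed.

Lemma nfacesB1 : n_faces ([set: T] :\ z1) e (sk n3 z1) = if odd n then 1 else 2.
Proof.
rewrite (nfaces_two esymm (d0 := d0I n3) (d1 := d1I n3) (rotB z1)).
- case: ifP => h; first by rewrite oddI.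
  by rewrite evenI // h.
- rewrite dartDv /d0I /= e_pr andbT; apply/andP; split; oq.
- rewrite dartDv /d1I /= e_sc andbT; apply/andP; split; oq.
- exact: covI.
Qed.

Lemma embedsB b : (b = z0 \/ b = z1) ->
  embeds_in_genus ([set: T] :\ b) e ((n - 1) %/ 2).
Proof.
move=> hb; apply/existsP; exists (sk n3 b); rewrite rotB /=.
have -> : n_faces ([set: T] :\ b) e (sk n3 b) = if odd n then 1 else 2.
  by case: hb => ->; [exact: nfacesB0 | exact: nfacesB1].
rewrite card_setD1 edgesD; apply/eqP; case: ifP => h; lia.
Qed.

Lemma ubD (v : T) k : embeds_in_genus ([set: T] :\ v) e k -> k <= (n - 1) %/ 2.
Proof.
move=> hk; have := embeds_ub esymm hk.
rewrite card_setD1 edgesD; move=> h.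
have hd : exists d, dart ([set: T] :\ v) e d.
  have : 0 < #|dart ([set: T] :\ v) e| by rewrite card_dartD; lia.
  by case/card_gt0P => d hd; exists d.
have := h hd; lia.
Qed.

Lemma conn_chain (b : T) k : nat_of_ord b < 2 -> 2 <= k <= N - 1 ->
  connect (induced ([set: T] :\ b) e) (om k) (om (N - 1)).
Proof.
move=> hb.
have : forall i, 2 <= N - 1 - i -> connect (induced ([set: T] :\ b) e) (om (N - 1 - i)) (om (N - 1)).
  elim=> [|i ih] hi; first by rewrite subn0.
  apply: connect_trans (connect1 _) (ih _); last lia.
  rewrite /induced !in_setD1 !in_setT !andbT (nbE n3).
  apply/and3P; split; [oq | oq | apply/orP; left; oq].
move=> h hk; have := h (N - 1 - k); have -> : N - 1 - (N - 1 - k) = k by lia.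
by apply; lia.
Qed.

Lemma indsym (A : {set T}) : connect_sym (induced A e).
Proof.
apply: sym_connect_sym => x y; rewrite /induced nb_sym.
by case: (x \in A); case: (y \in A).
Qed.

Lemma connB b : (b = z0 \/ b = z1) -> connected ([set: T] :\ b) e.
Proof.
move=> hb.
have hb2 : nat_of_ord b < 2 by case: hb => ->; rewrite /= modn_small //; lia.
have hr : forall x, x \in [set: T] :\ b -> connect (induced ([set: T] :\ b) e) x (om (N - 1)).
  move=> x; rewrite -(omK n3 x) in_setD1 in_setT andbT => hx.
  have hxN := ltn_ord x.
  case: (leqP 2 x) => h2; first by apply: conn_chain => //; lia.
  move: hx; case: hb => hb hx; subst b.
  - apply: (connect_trans (y := om 2)); last by apply: conn_chain => //; lia.
    apply: connect1; rewrite /induced !in_setD1 !in_setT !andbT hx (nbE n3) /=.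
    apply/andP; split; first by move: hx; oq.
    apply/orP; left; move: hx; oq.
  - apply: connect1; rewrite /induced !in_setD1 !in_setT !andbT hx (nbE n3) /=.
    apply/andP; split; first by move: hx; oq.
    apply/orP; right; apply/orP; left; move: hx; oq.
move=> x y hx hy.
by apply: connect_trans (hr x hx) _; rewrite indsym; apply: hr.
Qed.

Definition shf (s : nat) (x : T) : T := om (x + s).

Lemma shf_inj s : s < N -> injective (shf s).
Proof. move=> hs x y /(congr1 val) /= => h; apply: val_inj => /=; move: h; crunch. Qed.

End J.

End MJ.
Import MJ.

Module MK.

Section K.
Variable n : nat.
Hypothesis n3 : 3 <= n.
Local Notation N := (2 * n).
Local Notation T := 'I_(2 * n).
Local Notation om := (om n3).
Local Notation sc := (sc n3).
Local Notation pr := (pr n3).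
Local Notation ch := (ch n3).
Local Notation e := (@neckband n).
Local Notation z0 := (z0 n3).
Local Notation z1 := (om 1).
Local Notation shf := (shf n3).

Local Ltac oq := try (first [apply: val_inj | rewrite -!val_eqE]); rewrite /= ?val_om; crunch.

Lemma sh_sc s x : s < N -> shf s (sc x) = sc (shf s x). Proof. move=> hs; oq. Qed.
Lemma sh_pr s x : s < N -> shf s (pr x) = pr (shf s x). Proof. move=> hs; oq. Qed.
Lemma sh_ch s x : s < N -> ~~ odd s -> shf s (ch x) = ch (shf s x). Proof. move=> hs es; oq. Qed.

Lemma sh_e s (hs : s < N) (es : ~~ odd s) x y : e (shf s x) (shf s y) = e x y.
Proof.
by rewrite !(nbE n3) -(sh_sc _ hs) -(sh_pr _ hs) -(sh_ch _ hs es) !(inj_eq (@shf_inj n n3 s hs)).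
Qed.

Lemma mainv (v : T) : connected ([set: T] :\ v) e /\ max_genus ([set: T] :\ v) e = (n - 1) %/ 2.
Proof.
pose s := 2 * (v %/ 2).
have hv := ltn_ord v.
have hs : s < N by rewrite /s; lia.
have es : ~~ odd s by rewrite /s; lia.
pose phi : {perm T} := perm (@shf_inj n n3 s hs).
have phie : forall x y, e (phi x) (phi y) = e x y by move=> x y; rewrite !permE sh_e.
pose b := if odd v then z1 else z0.
have hb : b = z0 \/ b = z1 by rewrite /b; case: (odd v); [right | left].
have hpb : phi b = v.
  rewrite permE /b; case ov: (odd v); apply: val_inj; rewrite /=; crunch.
have hset : [set: T] :\ v = phi @: ([set: T] :\ b).
  apply/setP => x; rewrite -[x](permKV phi) mem_imset; last exact: perm_inj.
  by rewrite !in_setD1 !in_setT !andbT -{1}hpb (inj_eq perm_inj).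
split.
  rewrite hset; apply: (connected_conj phie); exact: connB.
apply: max_genus_eq.
- rewrite hset; apply: (embeds_conj (@esymm n) phie); exact: embedsB.
- rewrite card_dartD; lia.
- move=> k; exact: ubD.
Qed.

End K.


End MK.
Import MK.

Theorem theorem2p1 (n : nat) (hn : 3 <= n) (v : 'I_(2 * n)) :
  connected ([set: 'I_(2 * n)] :\ v) (@neckband n) /\
  max_genus ([set: 'I_(2 * n)] :\ v) (@neckband n) =
    max_genus [set: 'I_(2 * n)] (@neckband n) - 1.
Proof.
have [hc hm] := mainv hn v.
split => //.
rewrite hm (maxF hn); lia.
Qed.
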